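(* Let $V$ be a real Hilbert space, let $W\subset V$ be a subspace of finite dimension $m$, and let $P_W$ denote the orthogonal projection onto $W$. A map $A:W\to V$ has the form $A(w)=w+B(w)$ for all $w\in W$, with $B:W\to W^\perp$ affine, if and only if there exist $\bar u\in V$ and a linear subspace $V_n\subset V$ of dimension $n\le m$ with $V_n\cap W^\perp=\{0\}$ such that $A$ coincides with the affine PBDW algorithm for $\bar u+V_n$, namely $$A(w)=\operatorname{argmin}\{\operatorname{dist}(v,\bar u+V_n)\;:\; v\in w+W^\perp\}\quad\text{for all } w\in W.$$
   Context: $W^\perp$ is the orthogonal complement of $W$ in $V$, and $\operatorname{dist}(v,S)=\inf_{s\in S}\|v-s\|$. The condition $V_n\cap W^\perp=\{0\}$ guarantees that the minimizer in the definition of the affine PBDW algorithm exists and is unique. *)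

(* Defs.v *)
From HB Require Import structures.
From mathcomp Require Import all_boot all_order all_algebra.
From mathcomp Require Import boolp classical_sets reals.
Set Implicit Arguments. Unset Strict Implicit. Unset Printing Implicit Defensive.
Import Order.TTheory GRing.Theory Num.Theory.
Local Open Scope ring_scope.
Local Open Scope classical_set_scope.

Section Hilbert.
Variables (R : realType) (V : lmodType R) (ip : V -> V -> R).

Definition ipnorm (v : V) : R := Num.sqrt (ip v v).

Record is_hilbert : Prop := {
  ip_sym : forall u v, ip u v = ip v u;
  ip_linl : forall (a : R) u v w, ip (a *: u + v) w = a * ip u w + ip v w;
  ip_pos : forall v, v != 0 -> 0 < ip v v;
  ip_complete : forall u : nat -> V,
    (forall e : R, 0 < e -> exists N : nat, forall p q : nat,
        (N <= p)%N -> (N <= q)%N -> ipnorm (u p - u q) < e) ->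
    exists l : V, forall e : R, 0 < e -> exists N : nat, forall p : nat,
        (N <= p)%N -> ipnorm (u p - l) < e
}.

Definition subspace_of_dim (S : set V) (n : nat) : Prop :=
  exists b : 'I_n -> V,
    (forall c : 'I_n -> R, \sum_(i < n) c i *: b i = 0 -> forall i, c i = 0) /\
    S = [set v | exists c : 'I_n -> R, v = \sum_(i < n) c i *: b i].

Definition orth (W : set V) : set V := [set v | forall w, W w -> ip v w = 0].

Definition dist (v : V) (S : set V) : R := inf [set ipnorm (v - s) | s in S].

Definition translate (u : V) (S : set V) : set V := [set u + s | s in S].

Definition affine_on (W : set V) (B : V -> V) : Prop :=
  forall (t : R) x y, W x -> W y ->
    B (t *: x + (1 - t) *: y) = t *: B x + (1 - t) *: B y.

Definition is_argmin (f : V -> R) (S : set V) (x : V) : Prop :=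
  S x /\ (forall v, S v -> f x <= f v) /\
  (forall y, S y -> (forall v, S v -> f y <= f v) -> y = x).

End Hilbert.

(* Main.v *)
Require Import Defs.
From HB Require Import structures.
From mathcomp Require Import all_boot all_order all_algebra.
From mathcomp Require Import boolp classical_sets reals.
Import Order.TTheory GRing.Theory Num.Theory.
Local Open Scope ring_scope.
Local Open Scope classical_set_scope.
Section H.
Set Implicit Arguments. Unset Strict Implicit. Unset Printing Implicit Defensive.
Variables (R : realType) (V : lmodType R) (ip : V -> V -> R) (hV : is_hilbert ip).

Lemma ipDl u v w : ip (u + v) w = ip u w + ip v w.
Proof. by rewrite -[u in LHS]scale1r (ip_linl hV) mul1r. Qed.
Lemma ip0l w : ip 0 w = 0.
Proof. have := ipDl 0 0 w; rewrite addr0 => /eqP; rewrite -subr_eq0 opprD addrA subrr sub0r oppr_eq0 => /eqP //. Qed.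
Lemma ipZl a u w : ip (a *: u) w = a * ip u w.
Proof. by rewrite -[a *: u]addr0 (ip_linl hV) ip0l addr0. Qed.
Lemma ipNl u w : ip (- u) w = - ip u w.
Proof. by rewrite -scaleN1r ipZl mulN1r. Qed.
Lemma ipBl u v w : ip (u - v) w = ip u w - ip v w.
Proof. by rewrite ipDl ipNl. Qed.
Lemma ipDr u v w : ip w (u + v) = ip w u + ip w v.
Proof. by rewrite !(ip_sym hV w) ipDl. Qed.
Lemma ipZr a u w : ip w (a *: u) = a * ip w u.
Proof. by rewrite !(ip_sym hV w) ipZl. Qed.
Lemma ip0r w : ip w 0 = 0.
Proof. by rewrite (ip_sym hV) ip0l. Qed.
Lemma ipBr u v w : ip w (u - v) = ip w u - ip w v.
Proof. by rewrite !(ip_sym hV w) ipBl. Qed.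
Lemma ip_suml n (c : 'I_n -> R) (b : 'I_n -> V) w :
  ip (\sum_(i < n) c i *: b i) w = \sum_(i < n) c i * ip (b i) w.
Proof.
elim: n c b => [|n IH] c b; first by rewrite !big_ord0 ip0l.
by rewrite !big_ord_recr /= ipDl ipZl IH.
Qed.
Lemma ip_ge0 v : 0 <= ip v v.
Proof. have [->|/(ip_pos hV) /ltW //] := eqVneq v 0; by rewrite ip0l. Qed.
Lemma ip_eq0 v : ip v v = 0 -> v = 0.
Proof. move=> h; have [//|/(ip_pos hV)] := eqVneq v 0; by rewrite h ltxx. Qed.
Lemma ipnorm_ge0 v : 0 <= ipnorm ip v.
Proof. exact: sqrtr_ge0. Qed.
Lemma ipnorm_le u v : ip u u <= ip v v -> ipnorm ip u <= ipnorm ip v.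
Proof. by move=> h; rewrite /ipnorm ler_sqrt // ip_ge0. Qed.
Lemma ipnorm0 : ipnorm ip 0 = 0.
Proof. by rewrite /ipnorm ip0l sqrtr0. Qed.
Lemma ipnorm_eq0 v : ipnorm ip v <= 0 -> v = 0.
Proof.
move=> h; apply: ip_eq0; have h0 : ipnorm ip v = 0 by apply/eqP; rewrite eq_le h ipnorm_ge0.
by move: h0; rewrite /ipnorm => /eqP; rewrite sqrtr_eq0 => h1; apply/eqP; rewrite eq_le h1 ip_ge0.
Qed.

Lemma dist_le v S s : S s -> dist ip v S <= ipnorm ip (v - s).
Proof.
move=> Ss; apply: ge_inf; last by exists s.
by exists 0 => _ [x _ <-]; exact: ipnorm_ge0.
Qed.
Lemma dist_ge v S c : (exists s, S s) -> (forall s, S s -> c <= ipnorm ip (v - s)) ->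
  c <= dist ip v S.
Proof.
move=> [s Ss] h; apply: lb_le_inf; first by exists (ipnorm ip (v - s)), s.
by move=> _ [x Sx <-]; exact: h.
Qed.
Lemma dist_ge0 v S : (exists s, S s) -> 0 <= dist ip v S.
Proof. by move=> ne; apply: dist_ge => // s _; exact: ipnorm_ge0. Qed.

Lemma ip_sumr n (c : 'I_n -> R) (b : 'I_n -> V) w :
  ip w (\sum_(i < n) c i *: b i) = \sum_(i < n) c i * ip w (b i).
Proof. rewrite (ip_sym hV) ip_suml; apply: eq_bigr => i _; by rewrite (ip_sym hV). Qed.

Definition indep n (b : 'I_n -> V) :=
  forall c : 'I_n -> R, \sum_(i < n) c i *: b i = 0 -> forall i, c i = 0.

Lemma proj_exists n (b : 'I_n -> V) : indep b -> exists coef : V -> 'I_n -> R,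
  (forall v j, ip (v - \sum_(i < n) coef v i *: b i) (b j) = 0) /\
  (forall a u v i, coef (a *: u + v) i = a * coef u i + coef v i).
Proof.
move=> hb.
pose G : 'M[R]_n := \matrix_(i, j) ip (b i) (b j).
have uG : G \in unitmx.
  rewrite -row_free_unit; apply: inj_row_free => x hx.
  have hj : forall j, \sum_i x 0 i * ip (b i) (b j) = 0.
    move=> j; move/matrixP: hx => /(_ 0 j); rewrite !mxE => h; rewrite -[X in _ = X]h.
    by apply: eq_bigr => i _; rewrite mxE.
  pose s := \sum_(i < n) x 0 i *: b i.
  have ss : ip s s = 0.
    rewrite {2}/s ip_sumr big1 // => j _; rewrite /s ip_suml hj mulr0 //.
  have := hb (fun i => x 0 i) (ip_eq0 ss) => hx0.
  by apply/rowP => i; rewrite mxE hx0.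
pose r v : 'rV[R]_n := \row_j ip v (b j).
exists (fun v i => (r v *m invmx G) 0 i); split.
  move=> v j; rewrite ipBl ip_suml.
  have -> : \sum_(i < n) (r v *m invmx G) 0 i * ip (b i) (b j) = ((r v *m invmx G) *m G) 0 j.
    rewrite [in RHS]mxE; apply: eq_bigr => i _; rewrite [G _ _]mxE //.
  by rewrite mulmxKV // mxE subrr.
move=> a u v i.
have -> : r (a *: u + v) = a *: r u + r v by apply/rowP => j; rewrite !mxE (ip_linl hV).
by rewrite mulmxDl -scalemxAl !mxE.
Qed.

Definition span n (b : 'I_n -> V) : set V :=
  [set v | exists c : 'I_n -> R, v = \sum_(i < n) c i *: b i].

Definition lin (F : V -> V) := forall a u v, F (a *: u + v) = a *: F u + F v.

Lemma lin0 F : lin F -> F 0 = 0.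
Proof.
move=> hF; have := hF 1 0 0; rewrite !scale1r addr0 => /eqP.
by rewrite -subr_eq0 opprD addrA subrr sub0r oppr_eq0 => /eqP.
Qed.
Lemma linD F : lin F -> forall u v, F (u + v) = F u + F v.
Proof. by move=> hF u v; rewrite -[u in LHS]scale1r hF scale1r. Qed.
Lemma linZ F : lin F -> forall a u, F (a *: u) = a *: F u.
Proof. by move=> hF a u; rewrite -[a *: u]addr0 hF lin0 // addr0. Qed.
Lemma linN F : lin F -> forall u, F (- u) = - F u.
Proof. by move=> hF u; rewrite -scaleN1r linZ // scaleN1r. Qed.
Lemma linB F : lin F -> forall u v, F (u - v) = F u - F v.
Proof. by move=> hF u v; rewrite linD // linN. Qed.
Lemma lin_sum F n (c : 'I_n -> R) (b : 'I_n -> V) : lin F ->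
  F (\sum_(i < n) c i *: b i) = \sum_(i < n) c i *: F (b i).
Proof.
move=> hF; elim: n c b => [|n IH] c b; first by rewrite !big_ord0 lin0.
by rewrite !big_ord_recr /= linD // linZ // IH.
Qed.
Lemma lin_comp F G : lin F -> lin G -> lin (fun x => F (G x)).
Proof. by move=> hF hG a u v; rewrite hG hF. Qed.
Lemma comb (t : R) (K u1 u2 : V) :
  K + (t *: u1 + (1 - t) *: u2) = t *: (K + u1) + (1 - t) *: (K + u2).
Proof.
rewrite !scalerDr addrACA -scalerDl [t + _]addrC subrK scale1r //.
Qed.

Lemma lin_comb F : lin F -> forall (t : R) x y, F (t *: x + (1 - t) *: y) = t *: F x + (1 - t) *: F y.
Proof. by move=> hF t x y; rewrite hF linZ. Qed.

Lemma lin_affine F G K C : lin F -> lin G ->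
  forall (t : R) x y, F (K + G (t *: x + (1 - t) *: y - C)) =
     t *: F (K + G (x - C)) + (1 - t) *: F (K + G (y - C)).
Proof.
move=> hF hG t x y.
have -> : t *: x + (1 - t) *: y - C = t *: (x - C) + (1 - t) *: (y - C).
  by rewrite addrC comb ![- C + _]addrC.
by rewrite lin_comb // comb lin_comb.
Qed.

Lemma span0 n (b : 'I_n -> V) : span b 0.
Proof. by exists (fun=> 0); rewrite big1 // => i _; rewrite scale0r. Qed.
Lemma span_sum n (b : 'I_n -> V) c : span b (\sum_(i < n) c i *: b i).
Proof. by exists c. Qed.
Lemma spanD n (b : 'I_n -> V) u v : span b u -> span b v -> span b (u + v).
Proof.
move=> [c ->] [d ->]; exists (fun i => c i + d i).
by rewrite -big_split; apply: eq_bigr => i _; rewrite scalerDl.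
Qed.
Lemma spanZ n (b : 'I_n -> V) a u : span b u -> span b (a *: u).
Proof.
move=> [c ->]; exists (fun i => a * c i).
by rewrite scaler_sumr; apply: eq_bigr => i _; rewrite scalerA.
Qed.
Lemma spanB n (b : 'I_n -> V) u v : span b u -> span b v -> span b (u - v).
Proof. by move=> hu hv; apply: spanD => //; rewrite -scaleN1r; apply: spanZ. Qed.

Lemma orth_span n (b : 'I_n -> V) x : (forall j, ip x (b j) = 0) -> orth ip (span b) x.
Proof. by move=> h _ [c ->]; rewrite ip_sumr big1 // => j _; rewrite h mulr0. Qed.

Lemma decomp n (b : 'I_n -> V) a c : span b a -> orth ip (span b) c -> a + c = 0 -> a = 0.
Proof.
move=> ha hc e; apply: ip_eq0.
have : ip (a + c) a = 0 by rewrite e ip0l.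
by rewrite ipDl hc // addr0.
Qed.

Lemma pyth n (b : 'I_n -> V) a c : span b a -> orth ip (span b) c ->
  ipnorm ip a <= ipnorm ip (a + c).
Proof.
move=> ha hc; apply: ipnorm_le.
rewrite ipDl !ipDr (ip_sym hV a c) (hc a ha) addr0 add0r lerDl; exact: ip_ge0.
Qed.

Lemma pyth' n (b : 'I_n -> V) a c : span b a -> orth ip (span b) c ->
  ipnorm ip c <= ipnorm ip (c + a).
Proof.
move=> ha hc; apply: ipnorm_le.
rewrite ipDl !ipDr (ip_sym hV a c) (hc a ha) addr0 add0r lerDl; exact: ip_ge0.
Qed.

Lemma proj_min n (b : 'I_n -> V) (coef : V -> 'I_n -> R)
  (horth : forall v j, ip (v - \sum_(i < n) coef v i *: b i) (b j) = 0) v c :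
  ipnorm ip (v - \sum_(i < n) coef v i *: b i) <= ipnorm ip (v - \sum_(i < n) c i *: b i).
Proof.
set P := \sum_(i < n) coef v i *: b i.
have -> : v - \sum_(i < n) c i *: b i = (v - P) + \sum_(i < n) (coef v i - c i) *: b i.
  rewrite [X in _ = _ + X](eq_bigr (fun i => coef v i *: b i - c i *: b i)); last by move=> i _; rewrite scalerBl.
  by rewrite sumrB /P addrA subrK.
apply: (@pyth' n b) => //; first exact: span_sum.
by apply: orth_span.
Qed.

Lemma span_b n (b : 'I_n -> V) i : span b (b i).
Proof.
exists (fun j => (j == i)%:R).
rewrite (bigD1 i) //= eqxx scale1r big1 ?addr0 // => j /negbTE ->; by rewrite scale0r.
Qed.

Lemma forward m (b : 'I_m -> V) (hb : indep b) (A B : V -> V) :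
  (forall w, span b w -> orth ip (span b) (B w)) -> affine_on (span b) B ->
  (forall w, span b w -> A w = w + B w) ->
  exists ubar Vn n, (n <= m)%N /\ subspace_of_dim Vn n /\ Vn `&` orth ip (span b) = [set 0] /\
    (forall w, span b w -> is_argmin (fun v => dist ip v (translate ubar Vn))
                   (translate w (orth ip (span b))) (A w)).
Proof.
move=> hBo hBa hA.
pose L w := B w - B 0.
have Ldef w : L w = B w - B 0 by [].
clearbody L.
have hLo w : span b w -> orth ip (span b) (L w).
  move=> hw x hx; by rewrite Ldef ipBl (hBo w hw x hx) (hBo 0 (span0 b) x hx) subrr.
have hLc (t : R) x y : span b x -> span b y -> L (t *: x + (1 - t) *: y) = t *: L x + (1 - t) *: L y.
  by move=> hx hy; rewrite !Ldef hBa // addrC comb ![- B 0 + _]addrC.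
have hLZ a x : span b x -> L (a *: x) = a *: L x.
  move=> hx; have := hLc a x 0 hx (span0 b); rewrite scaler0 addr0 => ->.
  by rewrite (Ldef 0) subrr scaler0 addr0.
have hLD x y : span b x -> span b y -> L (x + y) = L x + L y.
  move=> hx hy.
  have e2 : (2 : R)^-1 * 2 = 1 by rewrite mulVf // pnatr_eq0.
  have e1 : 1 - (2 : R)^-1 = 2^-1.
    by apply: (@mulIf _ 2); rewrite ?pnatr_eq0 // mulrBl e2 mul1r [2 in LHS]/(1 + 1) addrK ?mulr1n.
  have -> : x + y = 2^-1 *: (2 *: x) + (1 - 2^-1) *: (2 *: y).
    by rewrite e1 !scalerA e2 !scale1r.
  rewrite hLc; [|exact: spanZ|exact: spanZ]. by rewrite (hLZ 2 x hx) (hLZ 2 y hy) !scalerA e1 e2 !scale1r.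
have hLsum c : span b (\sum_(i < m) c i *: b i) /\
    L (\sum_(i < m) c i *: b i) = \sum_(i < m) c i *: L (b i).
  apply: (big_ind2 (fun x y => span b x /\ L x = y)).
  - by split; [exact: span0 | rewrite Ldef subrr].
  - by move=> x1 x2 y1 y2 [h1 <-] [h2 <-]; split; [exact: spanD | exact: hLD].
  - by move=> i _; split; [apply: spanZ; exact: span_b | apply: hLZ; exact: span_b].
pose g i := b i + L (b i).
have hgsum c : \sum_(i < m) c i *: g i = \sum_(i < m) c i *: b i + L (\sum_(i < m) c i *: b i).
  rewrite (proj2 (hLsum c)) -big_split; apply: eq_bigr => i _; by rewrite scalerDr.
have hg : indep g.
  move=> c hc i; apply: (hb c) => //.
  apply: (decomp (span_sum b c) (hLo _ (span_sum b c))); by rewrite -hgsum.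
exists (B 0), (span g), m; split; first exact: leqnn.
split; first by exists g.
split.
  apply/seteqP; split => x.
    move=> [[c ->] hx] /=; rewrite hgsum.
    have w0 : \sum_(i < m) c i *: b i = 0.
      apply: (decomp (span_sum b c) (c := L (\sum_(i < m) c i *: b i) - \sum_(i < m) c i *: g i)).
        move=> y hy; rewrite ipBl (hLo _ (span_sum b c) y hy) (hx y hy) subrr //.
      by rewrite addrA -hgsum subrr.
    by rewrite w0 add0r Ldef subrr.
  move=> /= ->; split; first exact: span0.
  by move=> y _; exact: ip0l.
move=> w [c hwc].
set T := translate (B 0) (span g).
have neT : exists s, T s by exists (B 0 + 0), 0 => //; exact: span0.
have hAw : A w = B 0 + \sum_(i < m) c i *: g i.
  rewrite hA; last by rewrite hwc; exact: span_sum.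
  by rewrite hgsum -hwc Ldef addrCA (addrC (B 0)) subrK.
have hAwT : T (A w) by rewrite hAw; exists (\sum_(i < m) c i *: g i) => //; exact: span_sum.
have hf0 : dist ip (A w) T <= 0.
  by apply: le_trans (dist_le (A w) hAwT) _; rewrite subrr ipnorm0.
have hwW : span b w by rewrite hwc; exact: span_sum.
split.
  exists (B w); first exact: hBo.
  by rewrite hA.
split.
  by move=> v _; apply: le_trans hf0 _; apply: dist_ge0.
move=> y [p hp <-] hmin.
have hy0 : dist ip (w + p) T <= 0 := le_trans (hmin (A w) (ex_intro2 _ _ (B w) (hBo w hwW) (esym (hA w hwW)))) hf0.
have [coef [hco _]] := proj_exists hg.
set x := w + p - B 0.
have hx0 : ipnorm ip (x - \sum_(i < m) coef x i *: g i) <= 0.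
  apply: le_trans hy0; apply: dist_ge => // _ [s [d ->] <-].
  rewrite /x opprD addrA; exact: proj_min.
have E : x = \sum_(i < m) coef x i *: g i by apply: subr0_eq; exact: ipnorm_eq0.
rewrite hgsum Ldef in E.
set w' := \sum_(i < m) coef x i *: b i in E.
have E' : w + p = w' + B w'.
  by move: (congr1 (fun z => z + B 0) E); rewrite /x /= !addrA !subrK.
have hw'W : span b w' by exact: span_sum.
have ww : w = w'.
  apply: subr0_eq; apply: (decomp (spanB hwW hw'W) (c := p - B w')).
    move=> z hz; rewrite ipBl (hp z hz) (hBo w' hw'W z hz) subrr //.
  by rewrite addrACA E' -opprD subrr.
rewrite -ww in E'; move/addrI: E' => ->.
by rewrite hA.
Qed.

Lemma lin_coef n (b : 'I_n -> V) (coef : V -> 'I_n -> R) :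
  (forall a u v i, coef (a *: u + v) i = a * coef u i + coef v i) ->
  lin (fun v => \sum_(i < n) coef v i *: b i).
Proof.
move=> hl a u v; rewrite scaler_sumr -big_split; apply: eq_bigr => i _.
by rewrite hl scalerDl scalerA.
Qed.

Lemma backward m (b : 'I_m -> V) (hb : indep b) (A : V -> V) ubar n (e : 'I_n -> V)
  (he : indep e) :
  span e `&` orth ip (span b) = [set 0] ->
  (forall w, span b w -> is_argmin (fun v => dist ip v (translate ubar (span e)))
       (translate w (orth ip (span b))) (A w)) ->
  exists B, (forall w, span b w -> orth ip (span b) (B w)) /\ affine_on (span b) B /\
    (forall w, span b w -> A w = w + B w).
Proof.
move=> hcap hmin.
have [cW [hWo hWl]] := proj_exists hb.
pose PW v := \sum_(i < m) cW v i *: b i.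
have hPW : lin PW by exact: lin_coef.
have PWW v : span b (PW v) by exact: span_sum.
pose Q v := v - PW v.
have hQ : lin Q.
  move=> a u v; rewrite /Q hPW scalerBr opprD addrACA //.
have hQo v : orth ip (span b) (Q v) by apply: orth_span => j; exact: hWo.
pose z i := PW (e i).
have hz : indep z.
  move=> c hc; apply: he.
  have hs : PW (\sum_(i < n) c i *: e i) = 0 by rewrite lin_sum.
  move: hcap => /seteqP [hc1 _].
  apply: (hc1 (\sum_(i < n) c i *: e i)); split; first exact: span_sum.
  by have := hQo (\sum_(i < n) c i *: e i); rewrite /Q hs subr0.
have [cZ [hZo hZl]] := proj_exists hz.
pose S v := \sum_(i < n) cZ v i *: e i.
have hS : lin S by exact: lin_coef.
have PWS v : PW (S v) = \sum_(i < n) cZ v i *: z i by rewrite lin_sum.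
pose Bs w := Q (ubar + S (w - PW ubar)).
exists Bs; split; first by move=> w _; exact: hQo.
split; first by move=> t x y _ _; rewrite /Bs lin_affine.
move=> w hw.
have [hin [_ huniq]] := hmin w hw.
symmetry; apply: huniq; first by exists (Bs w) => //; exact: hQo.
set u0 := w - PW ubar.
set r := u0 - \sum_(i < n) cZ u0 i *: z i.
have h1 : dist ip (w + Bs w) (translate ubar (span e)) <= ipnorm ip r.
  have hT : translate ubar (span e) (ubar + S u0) by exists (S u0) => //; exact: span_sum.
  apply: le_trans (dist_le _ hT) _.
  have -> : w + Bs w - (ubar + S u0) = r.
    rewrite /Bs /Q -/u0 addrA addrAC addrK linD // PWS /r /u0 opprD addrA //.
  by [].
move=> v [p hp <-]; apply: le_trans h1 _.
apply: dist_ge; first by exists (ubar + 0), 0 => //; exact: span0.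
move=> _ [s' [d ->] <-].
set s := \sum_(i < n) d i *: e i.
have hr : ipnorm ip r <= ipnorm ip (u0 - PW s).
  by rewrite /s lin_sum //; exact: proj_min.
apply: le_trans hr _.
have -> : w + p - (ubar + s) = (u0 - PW s) + (p - Q (ubar + s)).
  rewrite /Q (linD hPW) opprB /u0 -[w - PW ubar - PW s]addrA -opprD.
  by rewrite addrACA addKr.
apply: pyth; first by apply: spanB => //; apply: spanB => //.
move=> y hy; rewrite ipBl (hp y hy) (hQo _ y hy) subrr //.
Qed.
End H.

Theorem mainTheorem1 (R : realType) (V : lmodType R) (ip : V -> V -> R)
  (hV : is_hilbert ip) (W : set V) (m : nat) (hW : subspace_of_dim W m)
  (A : V -> V) :
  (exists B : V -> V,
      (forall w, W w -> orth ip W (B w)) /\ affine_on W B /\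
      (forall w, W w -> A w = w + B w))
  <->
  (exists (ubar : V) (Vn : set V) (n : nat),
      (n <= m)%N /\ subspace_of_dim Vn n /\ Vn `&` orth ip W = [set 0] /\
      (forall w, W w ->
         is_argmin (fun v => dist ip v (translate ubar Vn))
                   (translate w (orth ip W)) (A w))).
Proof.
have [b [hb hWe]] := hW; subst W.
split.
- move=> [B [hBo [hBa hA]]]; exact: (forward hV hb hBo hBa hA).
- move=> [ubar [Vn [n [hnm [[e [he hVe]] [hcap hmin]]]]]]; subst Vn.
  exact: (backward hV hb he hcap hmin).
Qed.
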